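(* Let $X$ be a real Banach space having a strong atom $u\in S_X$ which is also a big point. Then $X$ is isometrically isomorphic to $\ell^1(\Gamma)$ for some set $\Gamma$.
   Context: $\mathcal{G}_X$ is the group of surjective linear isometries (rotations) of $X$; $u\in S_X$ is a big point if $\overline{\mathrm{conv}}(\{T(u):T\in\mathcal{G}_X\})=B_X$. For a closed subspace $Y\subset X$, a continuous linear surjective projection $P: X\to Y$ is an isometric reflection projection if $I-2P\in\mathcal{G}_X$; $Y$ is then an isometric reflection subspace. A point $u\in S_X$ is a strong atom if (1) the one-dimensional subspace $[u]$ is an isometric reflection subspace, and (2) for every closed subspace $Y\subset X$ and every isometric reflection projection $P:X\to Y$, either $P(u)=u$ or $P(u)=0$. *)

(* Defs.v *)
From Stdlib Require Import Reals List.
Open Scope R_scope.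

Record Banach := {
  car :> Type;
  vzero : car;
  vadd : car -> car -> car;
  vopp : car -> car;
  vscal : R -> car -> car;
  vnorm : car -> R;
  vadd_assoc : forall x y z, vadd x (vadd y z) = vadd (vadd x y) z;
  vadd_comm : forall x y, vadd x y = vadd y x;
  vadd_0 : forall x, vadd x vzero = x;
  vadd_opp : forall x, vadd x (vopp x) = vzero;
  vscal_1 : forall x, vscal 1 x = x;
  vscal_assoc : forall a b x, vscal a (vscal b x) = vscal (a * b) x;
  vscal_distr_v : forall a x y, vscal a (vadd x y) = vadd (vscal a x) (vscal a y);
  vscal_distr_s : forall a b x, vscal (a + b) x = vadd (vscal a x) (vscal b x);
  vnorm_eq0 : forall x, vnorm x = 0 -> x = vzero;
  vnorm_scal : forall a x, vnorm (vscal a x) = Rabs a * vnorm x;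
  vnorm_triangle : forall x y, vnorm (vadd x y) <= vnorm x + vnorm y;
  vcomplete : forall s : nat -> car,
     (forall eps, 0 < eps -> exists N, forall m n, (N <= m)%nat -> (N <= n)%nat ->
          vnorm (vadd (s m) (vopp (s n))) < eps) ->
     exists l, forall eps, 0 < eps -> exists N, forall n, (N <= n)%nat ->
          vnorm (vadd (s n) (vopp l)) < eps
}.

Arguments vzero {b0}.
Arguments vadd {b0}.
Arguments vopp {b0}.
Arguments vscal {b0}.
Arguments vnorm {b0}.

Section BanachDefs.
Variable X : Banach.

Definition vsub (x y : X) : X := vadd x (vopp y).

Definition S_X (x : X) : Prop := vnorm x = 1.
Definition B_X (x : X) : Prop := vnorm x <= 1.

Definition is_linear (T : X -> X) : Prop :=
  forall a b x y, T (vadd (vscal a x) (vscal b y)) = vadd (vscal a (T x)) (vscal b (T y)).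

Definition is_continuous (T : X -> X) : Prop :=
  forall x eps, 0 < eps -> exists delta, 0 < delta /\
    forall y, vnorm (vsub y x) < delta -> vnorm (vsub (T y) (T x)) < eps.

Definition rotation (T : X -> X) : Prop :=
  is_linear T /\ (forall x, vnorm (T x) = vnorm x) /\ (forall y, exists x, T x = y).

Definition vcomb (l : list (R * X)) : X :=
  fold_right (fun p acc => vadd (vscal (fst p) (snd p)) acc) vzero l.

Definition conv (A : X -> Prop) (x : X) : Prop :=
  exists l : list (R * X),
    Forall (fun p => 0 <= fst p /\ A (snd p)) l /\
    fold_right (fun p acc => fst p + acc) 0 l = 1 /\
    x = vcomb l.

Definition closure (A : X -> Prop) (x : X) : Prop :=
  forall eps, 0 < eps -> exists y, A y /\ vnorm (vsub x y) < eps.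

Definition orbit (u : X) (x : X) : Prop := exists T, rotation T /\ x = T u.

Definition big_point (u : X) : Prop :=
  S_X u /\ forall x, closure (conv (orbit u)) x <-> B_X x.

Definition closed_subspace (Y : X -> Prop) : Prop :=
  Y vzero /\
  (forall a b x y, Y x -> Y y -> Y (vadd (vscal a x) (vscal b y))) /\
  (forall x, closure Y x -> Y x).

Definition projection_onto (P : X -> X) (Y : X -> Prop) : Prop :=
  is_linear P /\ is_continuous P /\
  (forall x, Y (P x)) /\ (forall y, Y y -> exists x, P x = y) /\
  (forall x, P (P x) = P x).

Definition isometric_reflection_projection (P : X -> X) (Y : X -> Prop) : Prop :=
  closed_subspace Y /\ projection_onto P Y /\
  rotation (fun x => vsub x (vscal 2 (P x))).

Definition isometric_reflection_subspace (Y : X -> Prop) : Prop :=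
  exists P, isometric_reflection_projection P Y.

Definition span1 (u : X) (x : X) : Prop := exists a : R, x = vscal a u.

Definition strong_atom (u : X) : Prop :=
  S_X u /\
  isometric_reflection_subspace (span1 u) /\
  (forall (Y : X -> Prop) (P : X -> X), isometric_reflection_projection P Y ->
      P u = u \/ P u = vzero).

End BanachDefs.

Definition finsum_abs {G : Type} (f : G -> R) (l : list G) : R :=
  fold_right (fun g acc => Rabs (f g) + acc) 0 l.

Definition l1_partial_sums {G : Type} (f : G -> R) (s : R) : Prop :=
  exists l : list G, NoDup l /\ s = finsum_abs f l.

Definition in_l1 {G : Type} (f : G -> R) : Prop :=
  exists M, forall l : list G, NoDup l -> finsum_abs f l <= M.

Definition l1_norm_is {G : Type} (f : G -> R) (r : R) : Prop :=
  is_lub (l1_partial_sums f) r.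

Definition isometric_iso_l1 (X : Banach) (G : Type) (T : X -> (G -> R)) : Prop :=
  (forall a b (x y : X) g,
      T (vadd (vscal a x) (vscal b y)) g = a * T x g + b * T y g) /\
  (forall x : X, in_l1 (T x) /\ l1_norm_is (T x) (vnorm x)) /\
  (forall x y : X, T x = T y -> x = y) /\
  (forall f : G -> R, in_l1 f -> exists x : X, T x = f).

(* Main.v *)
Require Import Defs.
From Stdlib Require Import Reals List Lra ClassicalEpsilon Classical Permutation
  FunctionalExtensionality PropExtensionality ProofIrrelevance.
Open Scope R_scope.

Arguments vadd_assoc {b0}.
Arguments vadd_comm {b0}.
Arguments vadd_0 {b0}.
Arguments vadd_opp {b0}.
Arguments vscal_1 {b0}.
Arguments vscal_assoc {b0}.
Arguments vscal_distr_v {b0}.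
Arguments vscal_distr_s {b0}.
Arguments vnorm_eq0 {b0}.
Arguments vnorm_scal {b0}.
Arguments vnorm_triangle {b0}.
Arguments vcomplete {b0}.

Section Main.
Variable X : Banach.
Local Notation vsub := (vsub X).
Local Notation vcomb := (vcomb X).
Local Notation rotation := (rotation X).
Local Notation is_linear := (is_linear X).

Lemma vadd_0l (x : X) : vadd vzero x = x.
Proof. rewrite vadd_comm; apply vadd_0. Qed.

Lemma vadd_oppl (x : X) : vadd (vopp x) x = vzero.
Proof. rewrite vadd_comm; apply vadd_opp. Qed.

Lemma vadd_cancel_l (x y z : X) : vadd x y = vadd x z -> y = z.
Proof.
  intro H. assert (H1 : vadd (vopp x) (vadd x y) = vadd (vopp x) (vadd x z)) by now rewrite H.
  rewrite !vadd_assoc, vadd_oppl, !vadd_0l in H1. exact H1.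
Qed.

Lemma vscal_0 (x : X) : vscal 0 x = vzero.
Proof.
  apply (vadd_cancel_l (vscal 0 x)). rewrite <- vscal_distr_s, vadd_0.
  now replace (0+0) with 0 by ring.
Qed.

Lemma vopp_scal (x : X) : vopp x = vscal (-1) x.
Proof.
  apply (vadd_cancel_l x). rewrite vadd_opp.
  rewrite <- (vscal_1 x) at 1. rewrite <- vscal_distr_s.
  replace (1 + -1) with 0 by ring. now rewrite vscal_0.
Qed.

Lemma vscal_zero (a : R) : vscal a (@vzero X) = vzero.
Proof.
  rewrite <- (vscal_0 vzero). rewrite vscal_assoc. now rewrite Rmult_0_r.
Qed.

Lemma vnorm_0 : vnorm (@vzero X) = 0.
Proof. rewrite <- (vscal_0 vzero), vnorm_scal, Rabs_R0; ring. Qed.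

Lemma vnorm_opp (x : X) : vnorm (vopp x) = vnorm x.
Proof. rewrite vopp_scal, vnorm_scal. replace (Rabs (-1)) with 1; [ring|]. rewrite Rabs_left; lra. Qed.

Lemma vnorm_nonneg (x : X) : 0 <= vnorm x.
Proof.
  pose proof (vnorm_triangle x (vopp x)). rewrite vadd_opp, vnorm_0, vnorm_opp in H. lra.
Qed.

Lemma vopp_add (x y : X) : vopp (vadd x y) = vadd (vopp x) (vopp y).
Proof. rewrite !vopp_scal. apply vscal_distr_v. Qed.

Lemma vopp_opp (x : X) : vopp (vopp x) = x.
Proof. rewrite !vopp_scal, vscal_assoc. replace (-1 * -1) with 1 by ring. apply vscal_1. Qed.

Lemma vsub_self (x : X) : vsub x x = vzero.
Proof. apply vadd_opp. Qed.

Lemma vsub_0 (x : X) : vsub x vzero = x.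
Proof. unfold vsub. rewrite vopp_scal, vscal_zero. apply vadd_0. Qed.

Lemma vnorm_sub_sym (x y : X) : vnorm (vsub x y) = vnorm (vsub y x).
Proof.
  rewrite <- vnorm_opp. unfold vsub. rewrite vopp_add, vopp_opp, vadd_comm. reflexivity.
Qed.

Lemma vnorm_eq0_iff (x : X) : vnorm x = 0 <-> x = vzero.
Proof. split; [apply vnorm_eq0 | intros ->; apply vnorm_0]. Qed.

Lemma vsub_eq0 (x y : X) : vsub x y = vzero -> x = y.
Proof.
  intro H. unfold vsub in H. 
  assert (H1 : vadd (vadd x (vopp y)) y = vadd vzero y) by now rewrite H.
  rewrite <- vadd_assoc, vadd_oppl, vadd_0, vadd_0l in H1. exact H1.
Qed.

Lemma vnorm_sub_triangle (x y z : X) : vnorm (vsub x z) <= vnorm (vsub x y) + vnorm (vsub y z).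
Proof.
  replace (vsub x z) with (vadd (vsub x y) (vsub y z)). apply vnorm_triangle.
  unfold vsub. rewrite <- vadd_assoc, (vadd_assoc (vopp y)), vadd_oppl, vadd_0l. reflexivity.
Qed.

Lemma vscal_opp (a : R) (x : X) : vscal a (vopp x) = vopp (vscal a x).
Proof. rewrite !vopp_scal, !vscal_assoc. f_equal; ring. Qed.

Lemma vsub_scal (a : R) (x y : X) : vscal a (vsub x y) = vsub (vscal a x) (vscal a y).
Proof. unfold vsub. rewrite vscal_distr_v, vscal_opp. reflexivity. Qed.

Lemma vscal_sub_s (a b : R) (x : X) : vscal (a - b) x = vsub (vscal a x) (vscal b x).
Proof. unfold vsub, Rminus. rewrite vscal_distr_s. f_equal. rewrite vopp_scal, vscal_assoc. f_equal; ring. Qed.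

Lemma vnorm_scal_sub (a b : R) (x : X) : vnorm (vsub (vscal a x) (vscal b x)) = Rabs (a - b) * vnorm x.
Proof. rewrite <- vscal_sub_s. apply vnorm_scal. Qed.

Lemma vscal_inj (a b : R) (x : X) : x <> vzero -> vscal a x = vscal b x -> a = b.
Proof.
  intros Hx H. assert (H1 : vnorm (vsub (vscal a x) (vscal b x)) = 0) by (rewrite H, vsub_self; apply vnorm_0).
  rewrite vnorm_scal_sub in H1. apply Rmult_integral in H1. destruct H1 as [H1|H1].
  - destruct (Req_dec a b); [assumption|]. exfalso. pose proof (Rabs_pos_lt (a-b)). lra.
  - exfalso; apply Hx, vnorm_eq0, H1.
Qed.

Lemma vadd_sub (x y : X) : vsub (vadd x y) y = x.
Proof. unfold vsub. rewrite <- vadd_assoc, vadd_opp, vadd_0. reflexivity. Qed.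

Lemma vsub_add (x y : X) : vadd (vsub x y) y = x.
Proof. unfold vsub. rewrite <- vadd_assoc, vadd_oppl, vadd_0. reflexivity. Qed.

Lemma vsub_add_distr (a b c d : X) : vsub (vadd a b) (vadd c d) = vadd (vsub a c) (vsub b d).
Proof.
  unfold vsub. rewrite vopp_add. rewrite !vadd_assoc. f_equal.
  rewrite <- !vadd_assoc. f_equal. apply vadd_comm.
Qed.


Lemma lin_add (T : X -> X) : is_linear T -> forall x y, T (vadd x y) = vadd (T x) (T y).
Proof. intros HT x y. pose proof (HT 1 1 x y). rewrite !vscal_1 in H. exact H. Qed.

Lemma lin_scal (T : X -> X) : is_linear T -> forall a x, T (vscal a x) = vscal a (T x).
Proof.
  intros HT a x. pose proof (HT a 0 x x). rewrite !vscal_0, !vadd_0 in H. exact H.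
Qed.

Lemma lin_0 (T : X -> X) : is_linear T -> T vzero = vzero.
Proof. intros HT. rewrite <- (vscal_0 vzero), lin_scal by exact HT. rewrite !vscal_0. reflexivity. Qed.

Lemma lin_opp (T : X -> X) : is_linear T -> forall x, T (vopp x) = vopp (T x).
Proof. intros HT x. rewrite !vopp_scal. apply lin_scal, HT. Qed.

Lemma lin_sub (T : X -> X) : is_linear T -> forall x y, T (vsub x y) = vsub (T x) (T y).
Proof. intros HT x y. unfold vsub. rewrite lin_add, lin_opp by exact HT. reflexivity. Qed.

Lemma mk_linear (T : X -> X) : (forall x y, T (vadd x y) = vadd (T x) (T y)) ->
  (forall a x, T (vscal a x) = vscal a (T x)) -> is_linear T.
Proof. intros H1 H2 a b x y. rewrite H1, !H2. reflexivity. Qed.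

Lemma rotation_ext (T T' : X -> X) : (forall x, T x = T' x) -> rotation T -> rotation T'.
Proof.
  intros E [HL [HN HS]]. split; [|split].
  - intros a b x y. rewrite <- !E. apply HL.
  - intros x. rewrite <- E. apply HN.
  - intros y. destruct (HS y) as [x Hx]. exists x. rewrite <- E. exact Hx.
Qed.

Lemma rotation_comp (A B : X -> X) : rotation A -> rotation B -> rotation (fun x => A (B x)).
Proof.
  intros [AL [AN AS]] [BL [BN BS]]. split; [|split].
  - intros a b x y. rewrite BL, AL. reflexivity.
  - intros x. rewrite AN, BN. reflexivity.
  - intros y. destruct (AS y) as [z Hz]. destruct (BS z) as [x Hx]. exists x. rewrite Hx. exact Hz.
Qed.

Lemma rotation_inj (T : X -> X) : rotation T -> forall x y, T x = T y -> x = y.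
Proof.
  intros [TL [TN _]] x y H. apply vsub_eq0, vnorm_eq0. rewrite <- TN, lin_sub by exact TL.
  rewrite H, vsub_self. apply vnorm_0.
Qed.

Definition rinv (T : X -> X) (y : X) : X := epsilon (inhabits vzero) (fun x => T x = y).

Lemma rinv_r (T : X -> X) : rotation T -> forall y, T (rinv T y) = y.
Proof. intros HT y. unfold rinv. apply epsilon_spec. apply HT. Qed.

Lemma rinv_l (T : X -> X) : rotation T -> forall x, rinv T (T x) = x.
Proof. intros HT x. apply (rotation_inj T HT). apply rinv_r, HT. Qed.

Lemma rotation_rinv (T : X -> X) : rotation T -> rotation (rinv T).
Proof.
  intros HT. pose proof HT as [TL [TN TS]]. split; [|split].
  - intros a b x y. apply (rotation_inj T HT). rewrite rinv_r by exact HT.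
    rewrite TL, !rinv_r by exact HT. reflexivity.
  - intros x. rewrite <- TN, rinv_r by exact HT. reflexivity.
  - intros y. exists (T y). apply rinv_l, HT.
Qed.

Lemma rotation_id : rotation (fun x => x).
Proof. split; [|split]; auto. intros a b x y; reflexivity. intros y; exists y; reflexivity. Qed.

Lemma rotation_neg : rotation (fun x => vopp x).
Proof.
  split; [|split].
  - intros a b x y. rewrite vopp_add, !vscal_opp. reflexivity.
  - apply vnorm_opp.
  - intros y. exists (vopp y). apply vopp_opp.
Qed.

Definition good (P : X -> X) : Prop :=
  is_linear P /\ (forall x, P (P x) = P x) /\ rotation (fun x => vsub x (vscal 2 (P x))).

Lemma good_bound (P : X -> X) : good P -> forall x, vnorm (P x) <= vnorm x.
Proof.
  intros [PL [PP [_ [RN _]]]] x.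
  assert (E : vscal 2 (P x) = vsub x (vsub x (vscal 2 (P x)))).
  { unfold vsub. rewrite vopp_add, vopp_opp, vadd_assoc, vadd_opp, vadd_0l. reflexivity. }
  pose proof (f_equal vnorm E) as E2. rewrite vnorm_scal in E2.
  pose proof (vnorm_triangle x (vopp (vsub x (vscal 2 (P x))))) as T.
  fold (vsub x (vsub x (vscal 2 (P x)))) in T. rewrite <- E2, vnorm_opp, RN in T.
  rewrite Rabs_right in T by lra. lra.
Qed.

Lemma good_irp (P : X -> X) : good P -> isometric_reflection_projection X P (fun y => P y = y).
Proof.
  intros HP. pose proof HP as [PL [PP PR]]. pose proof (good_bound P HP) as PB.
  split; [|split; [|exact PR]].
  - split; [|split].
    + apply lin_0, PL.
    + intros a b x y Hx Hy. rewrite PL, Hx, Hy. reflexivity.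
    + intros x Hx. apply vsub_eq0, vnorm_eq0.
      apply Rle_antisym; [|apply vnorm_nonneg].
      apply Rnot_lt_le. intros Hlt.
      destruct (Hx (vnorm (vsub (P x) x) / 2)) as [y [Py Hy]]; [lra|].
      pose proof (vnorm_sub_triangle (P x) (P y) x).
      pose proof (PB (vsub x y)). rewrite lin_sub in H0 by exact PL. rewrite Py in H0.
      rewrite Py in H.
      pose proof (vnorm_sub_sym x y). lra.
  - split; [exact PL|split; [|split; [|split]]].
    + intros x eps He. exists eps. split; [exact He|]. intros y Hy.
      rewrite <- lin_sub by exact PL. eapply Rle_lt_trans; [apply PB|exact Hy].
    + intros x. apply PP.
    + intros y Hy. exists y. exact Hy.
    + exact PP.
Qed.

Lemma irp_good (P : X -> X) (Y : X -> Prop) : isometric_reflection_projection X P Y -> good P.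
Proof. intros [_ [[PL [_ [_ [_ PP]]]] PR]]. split; [exact PL|split; assumption]. Qed.

Lemma conj_good (A B P : X -> X) : rotation A -> rotation B ->
  (forall x, A (B x) = x) -> good P -> good (fun x => A (P (B x))).
Proof.
  intros HA HB AB [PL [PP PR]]. pose proof HA as [AL _]. pose proof HB as [BL _].
  split; [|split].
  - intros a b x y. rewrite BL, PL, AL. reflexivity.
  - intros x. assert (BA : forall y, B (A y) = y).
    { intros y. apply (rotation_inj A HA). apply AB. }
    rewrite BA, PP. reflexivity.
  - apply rotation_ext with (T := fun x => A ((fun z => vsub z (vscal 2 (P z))) (B x))).
    + intros x. simpl. rewrite lin_sub, lin_scal, AB by exact AL. reflexivity.
    + apply rotation_comp; [exact HA|]. apply (rotation_comp (fun z => vsub z (vscal 2 (P z))) B); assumption.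
Qed.


Definition lin_fun (F : X -> R) : Prop :=
  forall a b x y, F (vadd (vscal a x) (vscal b y)) = a * F x + b * F y.

Lemma lf_add (F : X -> R) : lin_fun F -> forall x y, F (vadd x y) = F x + F y.
Proof. intros H x y. pose proof (H 1 1 x y). rewrite !vscal_1 in H0. lra. Qed.
Lemma lf_scal (F : X -> R) : lin_fun F -> forall a x, F (vscal a x) = a * F x.
Proof. intros H a x. pose proof (H a 0 x x). rewrite vscal_0, vadd_0 in H0. lra. Qed.
Lemma lf_0 (F : X -> R) : lin_fun F -> F vzero = 0.
Proof. intros H. rewrite <- (vscal_0 vzero), lf_scal by exact H. ring. Qed.
Lemma lf_opp (F : X -> R) : lin_fun F -> forall x, F (vopp x) = - F x.
Proof. intros H x. rewrite vopp_scal, lf_scal by exact H. ring. Qed.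
Lemma lf_sub (F : X -> R) : lin_fun F -> forall x y, F (vsub x y) = F x - F y.
Proof. intros H x y. unfold vsub. rewrite lf_add, lf_opp by exact H. ring. Qed.

Variable u : X.
Hypothesis HSA : strong_atom X u.
Hypothesis HBP : big_point X u.

Lemma u_norm : vnorm u = 1.
Proof. apply HSA. Qed.

Lemma u_nz : u <> vzero.
Proof. intros E. pose proof u_norm. rewrite E, vnorm_0 in H. lra. Qed.

Local Notation orbit := (orbit X u).

Lemma SA_good (P : X -> X) : good P -> P u = u \/ P u = vzero.
Proof.
  intros HP. destruct HSA as [_ [_ H]]. apply (H (fun y => P y = y)). apply good_irp, HP.
Qed.

Lemma orbit_transport (P : X -> X) (w : X) : orbit w -> good P -> P w = w \/ P w = vzero.
Proof.
  intros [T [HT ->]] HP.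
  assert (HQ : good (fun x => rinv T (P (T x)))).
  { apply conj_good; try assumption. apply rotation_rinv, HT. apply rinv_l, HT. }
  destruct (SA_good _ HQ) as [E|E]; [left|right];
    apply (f_equal T) in E; rewrite rinv_r in E by exact HT; rewrite E; try reflexivity.
  apply lin_0, HT.
Qed.

Lemma orbit_norm (w : X) : orbit w -> vnorm w = 1.
Proof. intros [T [HT ->]]. destruct HT as [_ [HN _]]. rewrite HN. apply u_norm. Qed.

Lemma orbit_opp (w : X) : orbit w -> orbit (vopp w).
Proof.
  intros [T [HT ->]]. exists (fun x => vopp (T x)). split; [|reflexivity].
  apply (rotation_comp (fun x => vopp x) T); [apply rotation_neg|exact HT].
Qed.

Lemma orbit_nz (w : X) : orbit w -> w <> vzero.
Proof. intros H E. apply orbit_norm in H. rewrite E, vnorm_0 in H. lra. Qed.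

Definition P0 : X -> X := epsilon (inhabits (fun x => x))
  (fun P => isometric_reflection_projection X P (span1 X u)).

Lemma P0_spec : isometric_reflection_projection X P0 (span1 X u).
Proof. unfold P0. apply epsilon_spec. apply HSA. Qed.

Lemma P0_good : good P0.
Proof. eapply irp_good, P0_spec. Qed.

Definition g (x : X) : R := epsilon (inhabits 0) (fun a => P0 x = vscal a u).

Lemma g_spec (x : X) : P0 x = vscal (g x) u.
Proof.
  unfold g. apply epsilon_spec. destruct P0_spec as [_ [[_ [_ [H _]]] _]].
  destruct (H x) as [a Ha]. exists a. exact Ha.
Qed.

Lemma P0_u : P0 u = u.
Proof.
  destruct P0_spec as [_ [[_ [_ [_ [H HPP]]]] _]].
  destruct (H u) as [x Hx]. exists 1. symmetry; apply vscal_1.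
  rewrite <- Hx. apply HPP.
Qed.

Lemma g_lin : lin_fun g.
Proof.
  intros a b x y. apply (vscal_inj _ _ u u_nz). rewrite <- g_spec.
  destruct P0_good as [PL _]. rewrite PL, !g_spec, !vscal_assoc, vscal_distr_s. reflexivity.
Qed.

Lemma g_bound (x : X) : Rabs (g x) <= vnorm x.
Proof.
  pose proof (good_bound _ P0_good x). rewrite g_spec, vnorm_scal, u_norm in H. lra.
Qed.

Lemma g_u : g u = 1.
Proof.
  apply (vscal_inj _ _ u u_nz). rewrite <- g_spec, P0_u, vscal_1. reflexivity.
Qed.

Definition Tof (w : X) : X -> X :=
  epsilon (inhabits (fun x => x)) (fun T => rotation T /\ w = T u).

Lemma Tof_spec (w : X) : orbit w -> rotation (Tof w) /\ w = Tof w u.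
Proof. intros H. unfold Tof. apply epsilon_spec. exact H. Qed.

Definition f (w : X) (x : X) : R := g (rinv (Tof w) x).

Lemma f_lin (w : X) : orbit w -> lin_fun (f w).
Proof.
  intros H a b x y. unfold f. destruct (Tof_spec w H) as [HT _].
  destruct (rotation_rinv _ HT) as [RL _]. rewrite RL. apply g_lin.
Qed.

Lemma f_bound (w : X) (x : X) : orbit w -> Rabs (f w x) <= vnorm x.
Proof.
  intros H. unfold f. destruct (Tof_spec w H) as [HT _].
  destruct (rotation_rinv _ HT) as [_ [RN _]]. rewrite <- RN. apply g_bound.
Qed.

Lemma f_self (w : X) : orbit w -> f w w = 1.
Proof.
  intros H. unfold f. destruct (Tof_spec w H) as [HT E].
  rewrite E at 2. rewrite rinv_l by exact HT. apply g_u.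
Qed.

Lemma Pv_good (w : X) : orbit w -> good (fun x => Tof w (P0 (rinv (Tof w) x))).
Proof.
  intros H. destruct (Tof_spec w H) as [HT E].
  apply conj_good; [exact HT|apply rotation_rinv, HT|apply rinv_r, HT|apply P0_good].
Qed.

Lemma Pv_eq (w x : X) : orbit w -> Tof w (P0 (rinv (Tof w) x)) = vscal (f w x) w.
Proof.
  intros H. destruct (Tof_spec w H) as [HT E]. rewrite g_spec.
  destruct HT as [TL _]. rewrite lin_scal by exact TL. rewrite <- E. reflexivity.
Qed.

Lemma f_zero (v w : X) : orbit v -> orbit w -> w <> v -> w <> vopp v -> f v w = 0.
Proof.
  intros Hv Hw N1 N2.
  destruct (orbit_transport _ w Hw (Pv_good v Hv)) as [E|E]; rewrite Pv_eq in E by exact Hv.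
  - exfalso. pose proof (f_equal vnorm E) as E2. rewrite vnorm_scal, !orbit_norm in E2 by assumption.
    destruct (Rle_dec 0 (f v w)).
    + rewrite Rabs_right in E2 by lra. apply N1. rewrite <- E. replace (f v w) with 1 by lra. apply vscal_1.
    + rewrite Rabs_left in E2 by lra. apply N2. rewrite <- E. replace (f v w) with (-1) by lra.
      symmetry; apply vopp_scal.
  - apply (vscal_inj _ _ v (orbit_nz v Hv)). rewrite E, vscal_0. reflexivity.
Qed.

Lemma f_oppself (v : X) : orbit v -> f v (vopp v) = -1.
Proof. intros H. rewrite lf_opp, f_self by (try apply f_lin; exact H). ring. Qed.


Definition sumL {A : Type} (h : A -> R) (l : list A) : R := fold_right (fun v acc => h v + acc) 0 l.

Lemma sumL_app {A : Type} (h : A -> R) l1 l2 : sumL h (l1 ++ l2) = sumL h l1 + sumL h l2.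
Proof. induction l1; simpl; [ring|]. rewrite IHl1. ring. Qed.

Lemma sumL_le {A : Type} (h h' : A -> R) l : (forall v, In v l -> h v <= h' v) -> sumL h l <= sumL h' l.
Proof.
  induction l; simpl; intros H; [lra|].
  pose proof (H a (or_introl eq_refl)). assert (sumL h l <= sumL h' l) by (apply IHl; auto). lra.
Qed.

Lemma sumL_ext {A : Type} (h h' : A -> R) l : (forall v, In v l -> h v = h' v) -> sumL h l = sumL h' l.
Proof. intros H. apply Rle_antisym; apply sumL_le; intros v Hv; rewrite (H v Hv); lra. Qed.

Lemma sumL_nonneg {A : Type} (h : A -> R) l : (forall v, 0 <= h v) -> 0 <= sumL h l.
Proof. induction l; simpl; intros H; [lra|]. pose proof (H a). pose proof (IHl H). lra. Qed.

Lemma sumL_zero {A : Type} (h : A -> R) l : (forall v, In v l -> h v = 0) -> sumL h l = 0.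
Proof. intros H. rewrite (sumL_ext h (fun _ => 0)) by exact H. clear H. induction l; simpl; [ring|]. rewrite IHl. ring. Qed.

Lemma sumL_single {A : Type} (h : A -> R) l r : NoDup l -> (forall v, In v l -> v <> r -> h v = 0) ->
  sumL h l = if excluded_middle_informative (In r l) then h r else 0.
Proof.
  induction l as [|a l IH]; intros ND H; simpl.
  - destruct (excluded_middle_informative False); [contradiction|reflexivity].
  - inversion ND; subst. destruct (excluded_middle_informative (a = r \/ In r l)) as [[E|E]|E].
    + subst. rewrite sumL_zero; [ring|]. intros v Hv. apply H; [now right|]. intros ->. contradiction.
    + assert (Ha : a <> r) by (intros ->; contradiction). rewrite (H a (or_introl eq_refl) Ha).
      rewrite IH; auto. destruct (excluded_middle_informative (In r l)); [ring|contradiction].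
      intros v Hv. apply H. now right.
    + assert (Ha : a <> r) by (intros ->; auto). rewrite (H a (or_introl eq_refl) Ha).
      rewrite IH; auto. destruct (excluded_middle_informative (In r l)); [tauto|ring].
      intros v Hv. apply H. now right.
Qed.

Lemma sumL_atmost1 {A : Type} (h : A -> R) l : NoDup l -> (forall v, h v <= 1) ->
  (forall v1 v2, h v1 <> 0 -> h v2 <> 0 -> v1 = v2) -> sumL h l <= 1.
Proof.
  induction l as [|a l IH]; intros ND H1 H2; simpl; [lra|]. inversion ND; subst.
  destruct (Req_dec (h a) 0) as [E|E].
  - rewrite E. pose proof (IH H4 H1 H2). lra.
  - rewrite sumL_zero. pose proof (H1 a). lra.
    intros v Hv. destruct (Req_dec (h v) 0); [assumption|]. exfalso.
    pose proof (H2 a v E H). subst. contradiction.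
Qed.

Definition rep (w : X) : X := epsilon (inhabits vzero) (fun z => z = w \/ z = vopp w).

Lemma rep_spec (w : X) : rep w = w \/ rep w = vopp w.
Proof. unfold rep. apply epsilon_spec. exists w. now left. Qed.

Lemma rep_opp (w : X) : rep (vopp w) = rep w.
Proof.
  unfold rep. f_equal. apply functional_extensionality. intros z.
  apply propositional_extensionality. rewrite vopp_opp. tauto.
Qed.

Lemma rep_rep (w : X) : rep (rep w) = rep w.
Proof. destruct (rep_spec w) as [E|E]; rewrite E at 1; [reflexivity|apply rep_opp]. Qed.

Lemma rep_orbit (w : X) : orbit w -> orbit (rep w).
Proof. intros H. destruct (rep_spec w) as [E|E]; rewrite E; [exact H|apply orbit_opp, H]. Qed.

Definition G : Type := {v : X | orbit v /\ rep v = v}.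

Definition toG (w : X) (H : orbit w) : G := exist _ (rep w) (conj (rep_orbit w H) (rep_rep w)).

Lemma G_eq (v1 v2 : G) : proj1_sig v1 = proj1_sig v2 -> v1 = v2.
Proof. destruct v1, v2; simpl. intros ->. f_equal. apply proof_irrelevance. Qed.

Lemma G_orbit (v : G) : orbit (proj1_sig v).
Proof. apply (proj2_sig v). Qed.

Lemma G_rep (v : G) : rep (proj1_sig v) = proj1_sig v.
Proof. apply (proj2_sig v). Qed.

Lemma G_norm (v : G) : vnorm (proj1_sig v) = 1.
Proof. apply orbit_norm, G_orbit. Qed.

Definition fG (v : G) (x : X) : R := f (proj1_sig v) x.

Lemma fG_lin (v : G) : lin_fun (fG v).
Proof. apply f_lin, G_orbit. Qed.

Lemma fG_bound (v : G) x : Rabs (fG v x) <= vnorm x.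
Proof. apply f_bound, G_orbit. Qed.

Lemma fG_nz (v : G) (w : X) : orbit w -> fG v w <> 0 -> proj1_sig v = rep w.
Proof.
  intros Hw N. destruct (classic (w = proj1_sig v)) as [E|E].
  - subst. symmetry. apply G_rep.
  - destruct (classic (w = vopp (proj1_sig v))) as [E2|E2].
    + subst. rewrite rep_opp. symmetry. apply G_rep.
    + exfalso. apply N. apply f_zero; auto. apply G_orbit.
Qed.

Lemma fG_self (v : G) : fG v (proj1_sig v) = 1.
Proof. apply f_self, G_orbit. Qed.

Lemma fG_other (v w : G) : v <> w -> fG v (proj1_sig w) = 0.
Proof.
  intros N. destruct (Req_dec (fG v (proj1_sig w)) 0) as [E|E]; [exact E|].
  exfalso. apply N. apply G_eq. rewrite (fG_nz v _ (G_orbit w) E). apply G_rep.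
Qed.

Lemma toG_spec (w : X) (H : orbit w) : w = vscal 1 (proj1_sig (toG w H)) \/ w = vscal (-1) (proj1_sig (toG w H)).
Proof.
  simpl. destruct (rep_spec w) as [E|E]; rewrite E.
  - left. symmetry. apply vscal_1.
  - right. rewrite <- vopp_scal. symmetry. apply vopp_opp.
Qed.


Lemma F_vcomb_le (F : X -> R) l : lin_fun F -> (forall w, orbit w -> F w <= 1) ->
  Forall (fun p => 0 <= fst p /\ orbit (snd p)) l ->
  F (vcomb l) <= fold_right (fun p acc => fst p + acc) 0 l.
Proof.
  intros HF HO HL. induction HL as [|[c w] l [Hc Hw] HL IH]; simpl.
  - rewrite lf_0 by exact HF. lra.
  - unfold Defs.vcomb in *. rewrite lf_add, lf_scal by exact HF. simpl in *.
    pose proof (HO w Hw). assert (c * F w <= c * 1) by (apply Rmult_le_compat_l; lra). lra.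
Qed.

Lemma bound_by_orbit (F : X -> R) (L : R) : lin_fun F -> 0 <= L -> (forall x, F x <= L * vnorm x) ->
  (forall w, orbit w -> F w <= 1) -> forall x, F x <= vnorm x.
Proof.
  intros HF HL0 HL HO.
  assert (HB : forall y, vnorm y <= 1 -> F y <= 1).
  { intros y Hy. apply Rnot_lt_le. intros Hlt.
    destruct HBP as [_ HBP']. apply HBP' in Hy.
    destruct (Hy ((F y - 1) / (L + 1))) as [z [[l [Hl [Hs ->]]] Hz]].
    { apply Rdiv_lt_0_compat; lra. }
    pose proof (F_vcomb_le F l HF HO Hl) as Hc. rewrite Hs in Hc.
    pose proof (HL (vsub y (vcomb l))) as H1. rewrite lf_sub in H1 by exact HF.
    assert (H2 : L * vnorm (vsub y (vcomb l)) <= L * ((F y - 1) / (L + 1))).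
    { apply Rmult_le_compat_l; lra. }
    assert (H3 : L * ((F y - 1) / (L + 1)) < F y - 1).
    { replace (L * ((F y - 1) / (L + 1))) with ((F y - 1) - (F y - 1) / (L + 1)) by (field; lra).
      assert (0 < (F y - 1) / (L + 1)) by (apply Rdiv_lt_0_compat; lra). lra. }
    lra. }
  intros x. destruct (Req_dec (vnorm x) 0) as [E|E].
  - apply vnorm_eq0 in E. subst. rewrite lf_0 by exact HF. rewrite vnorm_0. lra.
  - pose proof (vnorm_nonneg x).
    assert (Ex : x = vscal (vnorm x) (vscal (/ vnorm x) x)).
    { rewrite vscal_assoc, Rinv_r by exact E. symmetry; apply vscal_1. }
    rewrite Ex at 1. rewrite lf_scal by exact HF.
    assert (F (vscal (/ vnorm x) x) <= 1).
    { apply HB. rewrite vnorm_scal, Rabs_right.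
      rewrite Rinv_l by exact E. lra. apply Rle_ge, Rlt_le, Rinv_0_lt_compat. lra. }
    assert (vnorm x * F (vscal (/ vnorm x) x) <= vnorm x * 1) by (apply Rmult_le_compat_l; lra). lra.
Qed.

Lemma sumL_lin (H : G -> X -> R) l : (forall v, lin_fun (H v)) -> lin_fun (fun y => sumL (fun v => H v y) l).
Proof.
  intros HH a b x y. induction l as [|v l IH]; simpl; [ring|]. rewrite IH, HH. ring.
Qed.

Lemma sumL_const {A : Type} (c : R) (l : list A) : sumL (fun _ => c) l = INR (length l) * c.
Proof. induction l; [simpl; ring|]. change (sumL (fun _ => c) (a :: l)) with (c + sumL (fun _ => c) l). rewrite IHl. change (length (a :: l)) with (S (length l)). rewrite S_INR. ring. Qed.

Lemma lower_bound (x : X) (l : list G) : NoDup l -> finsum_abs (fun v => fG v x) l <= vnorm x.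
Proof.
  intros ND.
  set (sg := fun v => if Rle_dec 0 (fG v x) then 1 else -1).
  set (phi := fun y => sumL (fun v => sg v * fG v y) l).
  assert (Hphi : lin_fun phi).
  { apply (sumL_lin (fun v y => sg v * fG v y)). intros v a b y z.
    rewrite fG_lin. ring. }
  assert (Hsg : forall v y, sg v * fG v y <= Rabs (fG v y)).
  { intros v y. unfold sg. destruct (Rle_dec 0 (fG v x)).
    - pose proof (Rle_abs (fG v y)). lra.
    - pose proof (Rle_abs (- fG v y)). rewrite Rabs_Ropp in H. lra. }
  assert (Heq : phi x = finsum_abs (fun v => fG v x) l).
  { change (finsum_abs (fun v => fG v x) l) with (sumL (fun v => Rabs (fG v x)) l).
    apply sumL_ext. intros v _. unfold sg. destruct (Rle_dec 0 (fG v x)).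
    - rewrite Rabs_right by lra. ring.
    - rewrite Rabs_left by lra. ring. }
  rewrite <- Heq. apply (bound_by_orbit phi (INR (length l)) Hphi (pos_INR _)).
  - intros y. unfold phi. rewrite <- sumL_const. apply sumL_le. intros v _.
    eapply Rle_trans; [apply Hsg|apply fG_bound].
  - intros w Hw. apply sumL_atmost1; [exact ND| |].
    + intros v. eapply Rle_trans; [apply Hsg|]. rewrite <- (orbit_norm w Hw). apply fG_bound.
    + intros v1 v2 N1 N2. apply G_eq.
      assert (fG v1 w <> 0) by (intros E; apply N1; rewrite E; ring).
      assert (fG v2 w <> 0) by (intros E; apply N2; rewrite E; ring).
      rewrite (fG_nz v1 w Hw H), (fG_nz v2 w Hw H0). reflexivity.
Qed.


Definition SV (h : G -> R) (l : list G) : X :=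
  fold_right (fun v acc => vadd (vscal (h v) (proj1_sig v)) acc) vzero l.

Lemma SV_lf (F : X -> R) h l : lin_fun F -> F (SV h l) = sumL (fun v => h v * F (proj1_sig v)) l.
Proof.
  intros HF. induction l as [|v l IH]; simpl.
  - apply lf_0, HF.
  - rewrite lf_add, lf_scal by exact HF. fold (SV h l). rewrite IH. reflexivity.
Qed.

Lemma SV_norm h l : vnorm (SV h l) <= sumL (fun v => Rabs (h v)) l.
Proof.
  induction l as [|v l IH]; simpl.
  - rewrite vnorm_0. lra.
  - fold (SV h l). eapply Rle_trans; [apply vnorm_triangle|].
    rewrite vnorm_scal, G_norm. lra.
Qed.

Lemma SV_app h l1 l2 : SV h (l1 ++ l2) = vadd (SV h l1) (SV h l2).
Proof.
  induction l1 as [|v l IH]; simpl.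
  - symmetry. apply vadd_0l.
  - fold (SV h (l ++ l2)). fold (SV h l). rewrite IH. apply vadd_assoc.
Qed.

Lemma SV_ext h h' l : (forall v, In v l -> h v = h' v) -> SV h l = SV h' l.
Proof.
  induction l as [|v l IH]; simpl; intros H; [reflexivity|].
  rewrite H by now left. fold (SV h l). fold (SV h' l). rewrite IH; [reflexivity|]. intros; apply H; now right.
Qed.

Lemma SV_add h1 h2 l : SV (fun v => h1 v + h2 v) l = vadd (SV h1 l) (SV h2 l).
Proof.
  induction l as [|v l IH]; simpl.
  - symmetry. apply vadd_0.
  - fold (SV h1 l). fold (SV h2 l). fold (SV (fun v => h1 v + h2 v) l). rewrite IH, vscal_distr_s.
    rewrite <- !vadd_assoc. f_equal. rewrite !vadd_assoc. f_equal. apply vadd_comm.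
Qed.

Lemma SV_zero h l : (forall v, In v l -> h v = 0) -> SV h l = vzero.
Proof.
  intros H. rewrite (SV_ext h (fun _ => 0)) by exact H. clear H.
  induction l as [|v l IH]; simpl; [reflexivity|]. fold (SV (fun _ => 0) l). rewrite IH, vscal_0. apply vadd_0.
Qed.

Lemma SV_single h l r : NoDup l -> In r l -> (forall v, In v l -> v <> r -> h v = 0) ->
  SV h l = vscal (h r) (proj1_sig r).
Proof.
  induction l as [|a l IH]; intros ND Hr H; [destruct Hr|]. inversion ND; subst. simpl. fold (SV h l).
  destruct (classic (a = r)) as [E|E].
  - subst. rewrite SV_zero. apply vadd_0. intros v Hv. apply H; [now right|]. intros ->. contradiction.
  - rewrite (H a (or_introl eq_refl) E), vscal_0, vadd_0l. apply IH; auto.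
    destruct Hr; [contradiction|assumption]. intros v Hv. apply H. now right.
Qed.

Lemma fG_SV_in (v : G) h l : NoDup l -> In v l -> fG v (SV h l) = h v.
Proof.
  intros ND Hv. rewrite SV_lf by apply fG_lin.
  rewrite (sumL_single _ l v ND).
  - destruct (excluded_middle_informative (In v l)); [|contradiction]. rewrite fG_self. ring.
  - intros w _ N. rewrite fG_other by (intros E; apply N; symmetry; exact E). ring.
Qed.

Lemma fG_SV_out (v : G) h l : ~ In v l -> fG v (SV h l) = 0.
Proof.
  intros Hv. rewrite SV_lf by apply fG_lin. apply sumL_zero. intros w Hw.
  rewrite fG_other. ring. intros ->. contradiction.
Qed.

Lemma span_rep (L : list (R * X)) : Forall (fun p => orbit (snd p)) L ->
  exists l, NoDup l /\ vcomb L = SV (fun v => fG v (vcomb L)) l.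
Proof.
  induction 1 as [|[c w] L Hw HL [l' [ND' IH]]].
  - exists nil. split; [constructor|reflexivity].
  - simpl in Hw. set (r := toG w Hw).
    assert (Hs : exists s, w = vscal s (proj1_sig r)).
    { destruct (toG_spec w Hw) as [E|E]; eexists; exact E. }
    destruct Hs as [s Es].
    change (vcomb ((c, w) :: L)) with (vadd (vscal c w) (vcomb L)).
    set (y' := vcomb L) in *.
    assert (Ew : vscal c w = vscal (c * s) (proj1_sig r)) by (rewrite Es, vscal_assoc; reflexivity).
    assert (Hf : forall v, fG v (vadd (vscal c w) y') = (c * s) * fG v (proj1_sig r) + fG v y').
    { intros v. rewrite Ew, lf_add, lf_scal by apply fG_lin. reflexivity. }
    destruct (classic (In r l')) as [Hr|Hr].
    + exists l'. split; [exact ND'|].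
      rewrite (SV_ext _ (fun v => (c * s) * fG v (proj1_sig r) + fG v y')) by (intros; apply Hf).
      rewrite SV_add, <- IH. f_equal.
      rewrite (SV_single _ l' r ND' Hr). rewrite fG_self, Rmult_1_r, Ew. reflexivity.
      intros v _ N. rewrite fG_other by exact N. ring.
    + exists (r :: l'). split; [constructor; assumption|].
      simpl. fold (SV (fun v => fG v (vadd (vscal c w) y')) l').
      rewrite Hf, fG_self.
      assert (E0 : fG r y' = 0) by (rewrite IH; apply fG_SV_out; exact Hr).
      rewrite E0, Rmult_1_r, Rplus_0_r.
      rewrite (SV_ext _ (fun v => (c * s) * fG v (proj1_sig r) + fG v y')) by (intros; apply Hf).
      rewrite SV_add, <- IH, SV_zero. rewrite vadd_0l, Ew. reflexivity.
      intros v Hv. rewrite fG_other. ring. intros ->. contradiction.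
Qed.


Lemma SV_scal a h l : SV (fun v => a * h v) l = vscal a (SV h l).
Proof.
  induction l as [|v l IH]; simpl.
  - symmetry; apply vscal_zero.
  - fold (SV h l). fold (SV (fun v => a * h v) l). rewrite IH, vscal_distr_v, vscal_assoc. reflexivity.
Qed.

Lemma upper_bound (x : X) (b : R) :
  (forall l, NoDup l -> finsum_abs (fun v => fG v x) l <= b) -> vnorm x <= b.
Proof.
  intros H. pose proof (H nil (NoDup_nil _)) as Hb0. simpl in Hb0.
  apply Rnot_lt_le. intros Hlt.
  destruct (Req_dec (vnorm x) 0) as [E|E]; [lra|].
  pose proof (vnorm_nonneg x) as Hn0.
  set (n := vnorm x) in *.
  set (xh := vscal (/ n) x).
  assert (Ex : x = vscal n xh) by (unfold xh; rewrite vscal_assoc, Rinv_r by exact E; symmetry; apply vscal_1).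
  assert (Hxh : B_X X xh).
  { unfold B_X, xh. rewrite vnorm_scal, Rabs_right. fold n. rewrite Rinv_l by exact E. lra.
    apply Rle_ge, Rlt_le, Rinv_0_lt_compat. lra. }
  destruct HBP as [_ HBP']. apply HBP' in Hxh.
  destruct (Hxh ((n - b) / (3 * n))) as [z [[L [HL [_ ->]]] Hz]].
  { apply Rdiv_lt_0_compat; lra. }
  destruct (span_rep L) as [l [ND Ez]].
  { eapply Forall_impl; [|exact HL]. intros p [_ Hp]. exact Hp. }
  set (z := vcomb L) in *. set (y := vscal n z).
  assert (Ey : y = SV (fun v => fG v y) l).
  { unfold y. rewrite (SV_ext _ (fun v => n * fG v z)).
    rewrite SV_scal, <- Ez. reflexivity. intros v _. apply lf_scal, fG_lin. }
  assert (Hxy : vnorm (vsub x y) < (n - b) / 3).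
  { rewrite Ex. unfold y. rewrite <- vsub_scal, vnorm_scal, Rabs_right by lra.
    apply Rlt_le_trans with (n * ((n - b) / (3 * n))).
    apply Rmult_lt_compat_l; lra. right. field. lra. }
  assert (Hy : vnorm y <= b + vnorm (vsub y x)).
  { rewrite Ey at 1. eapply Rle_trans; [apply SV_norm|].
    apply Rle_trans with (sumL (fun v => Rabs (fG v x)) l + sumL (fun v => Rabs (fG v (vsub y x))) l).
    - unfold sumL at 3. fold (sumL (fun v => Rabs (fG v x) + Rabs (fG v (vsub y x))) l).
      rewrite <- (Rplus_0_r 0) at 1.
      assert (forall l0, sumL (fun v => Rabs (fG v x) + Rabs (fG v (vsub y x))) l0 =
        sumL (fun v => Rabs (fG v x)) l0 + sumL (fun v => Rabs (fG v (vsub y x))) l0) as Hsplit.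
      { induction l0; simpl; [ring|]. rewrite IHl0. ring. }
      clear Hsplit. 
      assert (HH : forall l0, sumL (fun v => Rabs (fG v y)) l0 <=
        sumL (fun v => Rabs (fG v x)) l0 + sumL (fun v => Rabs (fG v (vsub y x))) l0).
      { induction l0 as [|v l0 IH0]; simpl; [lra|].
        assert (fG v y = fG v x + fG v (vsub y x)) by (rewrite lf_sub by apply fG_lin; ring).
        rewrite H0. pose proof (Rabs_triang (fG v x) (fG v (vsub y x))). lra. }
      rewrite Rplus_0_r. apply HH.
    - apply Rplus_le_compat; [apply (H l ND)|apply (lower_bound _ l ND)]. }
  pose proof (vnorm_sub_triangle x y vzero) as T. rewrite !vsub_0 in T.
  rewrite vnorm_sub_sym in Hy. fold n in T. lra.
Qed.


Lemma sumL_incl {A : Type} (h : A -> R) (l1 l2 : list A) : (forall v, 0 <= h v) ->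
  NoDup l1 -> NoDup l2 -> incl l1 l2 -> sumL h l1 <= sumL h l2.
Proof.
  intros Hh. revert l2. induction l1 as [|a l1 IH]; intros l2 N1 N2 Hi.
  - simpl. apply sumL_nonneg, Hh.
  - inversion N1; subst. assert (Ha : In a l2) by (apply Hi; now left).
    destruct (in_split _ _ Ha) as [B1 [B2 ->]].
    destruct (NoDup_remove _ _ _ N2) as [N2' _].
    assert (sumL h l1 <= sumL h (B1 ++ B2)).
    { apply IH; auto. intros v Hv. assert (In v (B1 ++ a :: B2)) by (apply Hi; now right).
      apply in_app_or in H. apply in_or_app. destruct H as [H|[H|H]]; auto. subst. contradiction. }
    rewrite sumL_app in H |- *. simpl. lra.
Qed.

Definition notinb (l : list G) (v : G) : bool :=
  if excluded_middle_informative (In v l) then false else true.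

Lemma surj (f0 : G -> R) : in_l1 f0 -> exists x, forall v, fG v x = f0 v.
Proof.
  intros [M HM].
  set (E := fun s => exists l, NoDup l /\ s = sumL (fun v => Rabs (f0 v)) l).
  destruct (completeness E) as [Ms [HMs1 HMs2]].
  { exists M. intros s [l [Hl ->]]. apply HM, Hl. }
  { exists 0. exists nil. split; [constructor|reflexivity]. }
  assert (Hup : forall l, NoDup l -> sumL (fun v => Rabs (f0 v)) l <= Ms).
  { intros l Hl. apply HMs1. exists l. auto. }
  assert (Happ : forall e, 0 < e -> exists l, NoDup l /\ Ms - e < sumL (fun v => Rabs (f0 v)) l).
  { intros e He. apply NNPP. intros Hn. assert (Ms <= Ms - e); [|lra].
    apply HMs2. intros s [l [Hl ->]]. apply Rnot_lt_le. intros Hlt. apply Hn. exists l. auto. }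
  set (eps := fun n : nat => / (INR n + 1)).
  assert (Heps : forall n, 0 < eps n).
  { intros n. unfold eps. apply Rinv_0_lt_compat. pose proof (pos_INR n). lra. }
  set (P := fun n => epsilon (inhabits nil)
         (fun l => NoDup l /\ Ms - eps n < sumL (fun v => Rabs (f0 v)) l)).
  assert (HP : forall n, NoDup (P n) /\ Ms - eps n < sumL (fun v => Rabs (f0 v)) (P n)).
  { intros n. unfold P. apply epsilon_spec. apply Happ, Heps. }
  set (Lseq := fix Lseq (n : nat) : list G := match n with
          | O => P O
          | S k => Lseq k ++ filter (notinb (Lseq k)) (P (S k)) end).
  assert (HL : forall n, NoDup (Lseq n) /\ incl (P n) (Lseq n)).
  { induction n as [|n [IH1 IH2]]; simpl.
    - split; [apply HP|apply incl_refl].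
    - split.
      + apply NoDup_app; [exact IH1|apply NoDup_filter, HP|].
        intros a Ha Hb. apply filter_In in Hb. destruct Hb as [_ Hb]. unfold notinb in Hb.
        destruct (excluded_middle_informative (In a (Lseq n))); [discriminate|contradiction].
      + intros v Hv. apply in_or_app. destruct (classic (In v (Lseq n))) as [Hi|Hi]; [now left|right].
        apply filter_In. split; [exact Hv|]. unfold notinb.
        destruct (excluded_middle_informative (In v (Lseq n))); [contradiction|reflexivity]. }
  assert (Hpre : forall n m, (n <= m)%nat -> exists D, Lseq m = Lseq n ++ D).
  { intros n m Hnm. induction Hnm as [|m Hnm [D ED]].
    - exists nil. symmetry. apply app_nil_r.
    - exists (D ++ filter (notinb (Lseq m)) (P (S m))). simpl. rewrite ED, app_assoc. reflexivity. }
  assert (Hgap : forall n, Ms - sumL (fun v => Rabs (f0 v)) (Lseq n) < eps n).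
  { intros n. destruct (HL n) as [N1 N2]. destruct (HP n) as [N3 N4].
    pose proof (sumL_incl (fun v => Rabs (f0 v)) _ _ (fun v => Rabs_pos _) N3 N1 N2). lra. }
  set (s := fun n => SV f0 (Lseq n)).
  assert (Harch : forall e, 0 < e -> exists N, forall n, (N <= n)%nat -> eps n < e).
  { intros e He. destruct (INR_archimed e 1 He) as [N HN]. exists N. intros n Hn.
    unfold eps. apply Rle_lt_trans with (/ (INR N + 1)).
    - apply Rinv_le_contravar. pose proof (pos_INR N). lra. apply le_INR in Hn. lra.
    - pose proof (pos_INR N).
      apply (Rmult_lt_reg_l (INR N + 1)); [lra|]. rewrite Rinv_r by lra. nra. }
  assert (Hcs : forall n m, (n <= m)%nat -> vnorm (vsub (s m) (s n)) < eps n).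
  { intros n m Hnm. destruct (Hpre n m Hnm) as [D ED]. unfold s. rewrite ED, SV_app.
    rewrite vadd_comm, vadd_sub. eapply Rle_lt_trans; [apply SV_norm|].
    pose proof (Hup _ (proj1 (HL m))) as H1. rewrite ED, sumL_app in H1. pose proof (Hgap n). lra. }
  destruct (vcomplete s) as [x Hx].
  { intros e He. destruct (Harch e He) as [N HN]. exists N. intros m n Hm Hn.
    fold (vsub (s m) (s n)). destruct (Nat.le_ge_cases n m) as [H|H].
    - pose proof (Hcs n m H). pose proof (HN n Hn). lra.
    - rewrite vnorm_sub_sym. pose proof (Hcs m n H). pose proof (HN m Hm). lra. }
  exists x. intros v.
  assert (Hn : forall n, Rabs (fG v (s n) - f0 v) <= eps n).
  { intros n. destruct (HL n) as [N1 _]. unfold s. destruct (classic (In v (Lseq n))) as [Hi|Hi].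
    - rewrite fG_SV_in by assumption. rewrite Rminus_diag, Rabs_R0. apply Rlt_le, Heps.
    - rewrite fG_SV_out by assumption. rewrite Rminus_0_l, Rabs_Ropp.
      pose proof (Hup (v :: Lseq n) (NoDup_cons _ Hi N1)). simpl in H. pose proof (Hgap n). lra. }
  apply Rminus_diag_uniq. destruct (Req_dec (fG v x - f0 v) 0) as [Z|Z]; [exact Z|exfalso].
  pose proof (Rabs_pos_lt _ Z) as Hd. set (d := Rabs (fG v x - f0 v)) in *.
  destruct (Hx (d / 2)) as [N1 HN1]; [lra|].
  destruct (Harch (d / 2)) as [N2 HN2]; [lra|].
  set (n := Nat.max N1 N2).
  pose proof (HN1 n (Nat.le_max_l _ _)) as A1. pose proof (HN2 n (Nat.le_max_r _ _)) as A2.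
  pose proof (Hn n) as A3. fold (vsub (s n) x) in A1.
  pose proof (fG_bound v (vsub (s n) x)) as A4. rewrite lf_sub in A4 by apply fG_lin.
  pose proof (Rabs_triang (fG v x - fG v (s n)) (fG v (s n) - f0 v)) as A5.
  replace (fG v x - fG v (s n) + (fG v (s n) - f0 v)) with (fG v x - f0 v) in A5 by ring.
  rewrite <- Rabs_Ropp in A4. replace (- (fG v (s n) - fG v x)) with (fG v x - fG v (s n)) in A4 by ring.
  fold d in A5. lra.
Qed.

End Main.

Theorem theorem4p1 (X : Banach) (u : X) :
  strong_atom X u -> big_point X u ->
  exists (G : Type) (T : X -> (G -> R)), isometric_iso_l1 X G T.
Proof.
  intros HSA HBP. exists (G X u). exists (fun x v => fG X u v x).
  split; [|split; [|split]].
  - intros a b x y v. apply fG_lin; assumption.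
  - intros x. split.
    + exists (vnorm x). intros l Hl. apply lower_bound; assumption.
    + split.
      * intros s [l [Hl ->]]. apply lower_bound; assumption.
      * intros b Hb. apply (upper_bound X u HSA HBP). intros l Hl. apply Hb. exists l. auto.
  - intros x y E. apply vsub_eq0, vnorm_eq0. apply Rle_antisym; [|apply vnorm_nonneg].
    apply (upper_bound X u HSA HBP). intros l Hl.
    right. induction l as [|v l IH]; [reflexivity|]. simpl.
    inversion Hl; subst. rewrite (IH H2). rewrite lf_sub by (apply fG_lin; assumption).
    rewrite (equal_f E v). rewrite Rminus_diag, Rabs_R0. ring.
  - intros f0 Hf0. destruct (surj X u HSA f0 Hf0) as [x Hx]. exists x.
    apply functional_extensionality. exact Hx.
Qed.
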